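(* Let $\mathcal{G}=(\mathcal{V},\mathcal{E},w)$ be a simple connected weighted graph with at least one edge and with $d(v)\ge 1$ for all $v\in\mathcal{V}$. Let $s\in\mathcal{V}$, $\beta\in(0,1)$, and let $x$ solve $Tx=\beta r$ with $T=\beta D+D^{-1}L$ and $r$ the indicator vector of $s$. Then for every proper subset $\mathcal{C}\subsetneq\mathcal{V}$ with $s\in\mathcal{C}$, $$x[\bar{\mathcal{C}}]<\frac{1}{\beta}\,w(\partial(\mathcal{C})).$$
   Context: $d(v)=\sum_{u\sim v}w(u,v)$ is the weighted degree, $D=\operatorname{diag}(d(v))$, $L=D-A$ the combinatorial Laplacian. $r(s)=1$, $r(v)=0$ for $v\ne s$. For $\mathcal{S}\subseteq\mathcal{V}$, $\bar{\mathcal{S}}=\mathcal{V}\setminus\mathcal{S}$, $x[\mathcal{S}]=\sum_{v\in\mathcal{S}}x(v)$, $\partial(\mathcal{S})=\{\{u,v\}\in\mathcal{E}: u\in\mathcal{S},v\in\bar{\mathcal{S}}\}$ and $w(\partial(\mathcal{S}))=\sum_{e\in\partial(\mathcal{S})}w(e)$. *)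

(* Defs.v *)
From HB Require Import structures.
From mathcomp Require Import all_boot all_order all_algebra.
Set Implicit Arguments. Unset Strict Implicit. Unset Printing Implicit Defensive.
Import Order.TTheory GRing.Theory Num.Theory.
Local Open Scope ring_scope.

(* A weighted graph on vertex set 'I_n is given by a weight function
   w : 'I_n -> 'I_n -> R; {u,v} is an edge iff 0 < w u v. *)

Definition simple_wgraph (R : realFieldType) (n : nat) (w : 'I_n -> 'I_n -> R) : Prop :=
  (forall u v, w u v = w v u) /\ (forall u v, 0 <= w u v) /\ (forall v, w v v = 0).

Definition wedge (R : realFieldType) (n : nat) (w : 'I_n -> 'I_n -> R) : rel 'I_n :=
  fun u v => 0 < w u v.

Definition wconnected (R : realFieldType) (n : nat) (w : 'I_n -> 'I_n -> R) : Prop :=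
  forall u v, connect (wedge w) u v.

Definition has_edge (R : realFieldType) (n : nat) (w : 'I_n -> 'I_n -> R) : Prop :=
  exists u v, 0 < w u v.

Definition wdeg (R : realFieldType) (n : nat) (w : 'I_n -> 'I_n -> R) (v : 'I_n) : R :=
  \sum_(u | wedge w u v) w u v.

Definition adjmx (R : realFieldType) (n : nat) (w : 'I_n -> 'I_n -> R) : 'M[R]_n :=
  \matrix_(i, j) w i j.

Definition degmx (R : realFieldType) (n : nat) (w : 'I_n -> 'I_n -> R) : 'M[R]_n :=
  diag_mx (\row_i wdeg w i).

Definition lapmx (R : realFieldType) (n : nat) (w : 'I_n -> 'I_n -> R) : 'M[R]_n :=
  degmx w - adjmx w.

Definition Tmx (R : realFieldType) (n : nat) (w : 'I_n -> 'I_n -> R) (beta : R) : 'M[R]_n :=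
  beta *: degmx w + invmx (degmx w) *m lapmx w.

Definition indic (R : realFieldType) (n : nat) (s : 'I_n) : 'cV[R]_n :=
  \col_i (if i == s then 1 else 0).

Definition cut_weight (R : realFieldType) (n : nat) (w : 'I_n -> 'I_n -> R) (C : {set 'I_n}) : R :=
  \sum_(u in C) \sum_(v in ~: C | wedge w u v) w u v.

(* Main.v *)
Require Import Defs.
From HB Require Import structures.
From mathcomp Require Import all_boot all_order all_algebra.
Import Order.TTheory GRing.Theory Num.Theory.
Local Open Scope ring_scope.

From mathcomp Require Import ring lra.
Lemma exists_max (R : realDomainType) (I : finType) (i0 : I) (F : I -> R) :
  exists i, forall j, F j <= F i.
Proof.
case: (@arg_maxP _ _ I i0 xpredT F isT) => i _ H. by exists i => j; apply: H.
Qed.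

Lemma exists_min (R : realDomainType) (I : finType) (i0 : I) (F : I -> R) :
  exists i, forall j, F i <= F j.
Proof.
case: (@exists_max R I i0 (fun i => - F i)) => i H; exists i => j.
by rewrite -lerN2 H.
Qed.

Lemma wsum_deg (R : realFieldType) (n : nat) (w : 'I_n -> 'I_n -> R) v :
  simple_wgraph w -> \sum_u w u v = wdeg w v.
Proof.
move=> [_ [Hp _]]; rewrite /wdeg [RHS]big_mkcond /=; apply: eq_bigr => u _.
rewrite /wedge; case: ifP => // /negbT; rewrite -leNgt => H.
by apply/eqP; rewrite eq_le H Hp.
Qed.

Lemma entry_eq (R : realFieldType) (n : nat) (w : 'I_n -> 'I_n -> R)
  (s : 'I_n) (beta : R) (x : 'cV[R]_n) :
  simple_wgraph w -> (forall v, 1 <= wdeg w v) ->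
  Tmx w beta *m x = beta *: indic R s ->
  forall v, wdeg w v * (1 + beta * wdeg w v) * x v 0 =
    \sum_u w u v * x u 0 + beta * wdeg w v * (v == s)%:R.
Proof.
move=> Hs Hd H v.
have Du : degmx w \in unitmx.
  rewrite unitmxE det_diag unitfE; apply/prodf_neq0 => i _; rewrite mxE.
  by rewrite gt_eqF // (lt_le_trans ltr01).
move/(congr1 (fun M => (degmx w *m M) v 0)) : H.
rewrite /Tmx mulmxDl mulmxDr !mulmxA mulmxV // mul1mx /lapmx mulmxBl.
rewrite -!scalemxAr -scalemxAl -mulmxA /degmx !mul_diag_mx !mxE.
under eq_bigr do rewrite mxE.
case: Hs => Hsym _ H.
have -> : \sum_u w u v * x u 0 = \sum_i w v i * x i 0.
  by apply: eq_bigr => u _; rewrite Hsym.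
have -> : ((v == s)%:R : R) = (if v == s then 1 else 0) by case: (v == s).
move: H; set S := \sum_i _; set c := (if v == s then _ else _) => H.
have HS : S = beta * (wdeg w v * (wdeg w v * x v 0)) + wdeg w v * x v 0 - beta * (wdeg w v * c).
  by rewrite -H; ring.
rewrite HS; ring.
Qed.

Arguments entry_eq {R n w s beta x}.
Arguments wsum_deg {R n w}.
Arguments exists_min {R I}.
Arguments exists_max {R I}.
Lemma sum_lt (R : realFieldType) (I : finType) (P : pred I) (F G : I -> R) i0 :
  P i0 -> (forall i, P i -> F i <= G i) -> F i0 < G i0 ->
  \sum_(i | P i) F i < \sum_(i | P i) G i.
Proof.
move=> Pi H Hi; rewrite (bigD1 i0) //= [X in _ < X](bigD1 i0) //=.
apply: ltr_leD => //; apply: ler_sum => i /andP [Pi' _]; exact: H.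
Qed.

Arguments sum_lt {R I P F G}.
Lemma antisym_sum (R : realFieldType) (I : finType) (A : {set I}) (F : I -> I -> R) :
  (forall u v, F u v = - F v u) -> \sum_(v in A) \sum_(u in A) F u v = 0.
Proof.
move=> HF; set Z := (X in X = 0).
have : Z = - Z.
  rewrite /Z [LHS]exchange_big /= -sumrN; apply: eq_bigr => v _.
  rewrite -sumrN; apply: eq_bigr => u _; exact: HF.
lra.
Qed.

Theorem mainTheorem5 (R : realFieldType) (n : nat) (w : 'I_n -> 'I_n -> R)
  (s : 'I_n) (beta : R) (x : 'cV[R]_n) (C : {set 'I_n}) :
  simple_wgraph w -> wconnected w -> has_edge w ->
  (forall v, 1 <= wdeg w v) ->
  0 < beta < 1 ->
  Tmx w beta *m x = beta *: indic R s ->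
  C \proper [set: 'I_n] -> s \in C ->
  \sum_(v in ~: C) x v 0 < beta^-1 * cut_weight w C.
Proof.
move=> Hs Hc _ Hd /andP [b0 b1] HT HC sC.
have E := entry_eq Hs Hd HT.
have Hsym : forall u v, w u v = w v u by case: Hs.
have Hw0 : forall u v, 0 <= w u v by case: Hs => _ [].
have Hww : forall v, w v v = 0 by case: Hs => _ [].
set d := wdeg w in Hd E.
have Hdeg : forall v, \sum_u w u v = d v by move=> v; exact: wsum_deg.
have Sge : forall v (m : R), (forall u, m <= x u 0) -> d v * m <= \sum_u w u v * x u 0.
  move=> v m Hm; rewrite -Hdeg mulr_suml; apply: ler_sum => u _.
  by apply: ler_wpM2l.
have Sle : forall v (M : R), (forall u, x u 0 <= M) -> \sum_u w u v * x u 0 <= d v * M.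
  move=> v M Hm; rewrite -Hdeg mulr_suml; apply: ler_sum => u _.
  by apply: ler_wpM2l.
have d0 : forall v, 0 < d v by move=> v; apply: lt_le_trans (Hd v).
have xge0 : forall v, 0 <= x v 0.
  case: (exists_min s (fun v => x v 0)) => v0 Hv0 v.
  apply: le_trans (Hv0 v).
  have H1 := Sge v0 _ Hv0; have H2 := E v0.
  have H3 : 0 <= beta * (d v0 * (v0 == s)%:R).
    by apply: mulr_ge0; [exact: ltW | apply: mulr_ge0; [exact: ltW (d0 v0) | exact: ler0n]].
  have : 0 <= (beta * d v0 * d v0) * x v0 0.
    have -> : beta * d v0 * d v0 * x v0 0 = d v0 * (1 + beta * d v0) * x v0 0 - d v0 * x v0 0 by ring.
    rewrite H2; lra.
  by rewrite pmulr_rge0 // !mulr_gt0.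
case: (exists_max s (fun v => x v 0)) => v1 Hv1.
have xM1 : x v1 0 <= 1.
  have H1 := Sle v1 _ Hv1; have H2 := E v1.
  have hc : ((v1 == s)%:R : R) <= 1 by case: (_ == _).
  have hc' : beta * d v1 * (v1 == s)%:R <= beta * d v1 * 1.
    by apply: ler_wpM2l => //; rewrite mulr_ge0 ?ltW.
  have H4 : beta * d v1 * (d v1 * x v1 0) <= beta * d v1 * 1.
    have -> : beta * d v1 * (d v1 * x v1 0) = d v1 * (1 + beta * d v1) * x v1 0 - d v1 * x v1 0 by ring.
    rewrite H2; lra.
  rewrite ler_pM2l ?mulr_gt0 // in H4.
  apply: le_trans H4; rewrite -{1}[x v1 0]mul1r; apply: ler_wpM2r => //.
have xle : forall v, v != s -> (1 + beta) * x v 0 <= 1.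
  move=> v vs.
  have Hv : forall u, x u 0 <= 1 by move=> u; apply: le_trans (Hv1 u) xM1.
  have H1 := Sle v _ Hv; have H2 := E v; rewrite (negbTE vs) mulr0 addr0 in H2.
  have H4 : d v * ((1 + beta * d v) * x v 0) <= d v * 1 by rewrite mulrA H2.
  rewrite ler_pM2l // in H4; apply: le_trans H4; apply: ler_wpM2r => //.
  rewrite lerD2l -{1}[beta]mulr1; apply: ler_wpM2l => //; exact: ltW.
have xs1 : x s 0 < 1.
  have A : (1 + beta) * \sum_u w u s * x u 0 <= d s.
    rewrite mulr_sumr -Hdeg; apply: ler_sum => u _.
    case: (eqVneq u s) => [->|us]; first by rewrite Hww !mul0r mulr0.
    rewrite mulrCA -{2}[w u s]mulr1; apply: ler_wpM2l => //; exact: xle.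
  have H2 := E s; rewrite eqxx mulr1 in H2.
  have K1 : d s * ((1 + beta) * (1 + beta * d s) * x s 0) <= d s * (1 + beta + beta * beta).
    have -> : d s * ((1 + beta) * (1 + beta * d s) * x s 0) = (1 + beta) * (d s * (1 + beta * d s) * x s 0) by ring.
    rewrite H2; lra.
  rewrite ler_pM2l // in K1.
  have K2 : (1 + beta) * (1 + beta) <= (1 + beta) * (1 + beta * d s).
    apply: ler_wpM2l; first lra.
    rewrite lerD2l -{1}[beta]mulr1; apply: ler_wpM2l => //; exact: ltW.
  have Kp : 0 < (1 + beta) * (1 + beta * d s) by rewrite mulr_gt0 // ?addr_gt0 ?mulr_gt0.
  rewrite -(ltr_pM2l Kp) mulr1; lra.
have xlt1 : forall v, x v 0 < 1.
  move=> v; case: (eqVneq v s) => [->//|vs]; have := xle v vs; have := xge0 v; nra.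
have key : beta * \sum_(v in ~: C) d v * d v * x v 0 =
    \sum_(v in ~: C) \sum_u w u v * (x u 0 - x v 0).
  rewrite mulr_sumr; apply: eq_bigr => v vC.
  have vs : v != s by apply: contraTneq vC => ->; rewrite in_setC sC.
  have H2 := E v; rewrite (negbTE vs) mulr0 addr0 in H2.
  have -> : \sum_u w u v * (x u 0 - x v 0) = \sum_u w u v * x u 0 - (\sum_u w u v) * x v 0.
    by rewrite mulr_suml -sumrB; apply: eq_bigr => u _; ring.
  rewrite Hdeg -H2; ring.
have split : \sum_(v in ~: C) \sum_u w u v * (x u 0 - x v 0) =
    \sum_(v in ~: C) \sum_(u in C) w u v * (x u 0 - x v 0).
  have -> : \sum_(v in ~: C) \sum_u w u v * (x u 0 - x v 0) =
     \sum_(v in ~: C) \sum_(u in C) w u v * (x u 0 - x v 0) +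
     \sum_(v in ~: C) \sum_(u in ~: C) w u v * (x u 0 - x v 0).
    rewrite -big_split /=; apply: eq_bigr => v _.
    rewrite (bigID (fun u => u \in C)) /=; congr (_ + _); apply: eq_bigl => u.
    by rewrite in_setC.
  rewrite (@antisym_sum R _ (~: C) (fun u v => w u v * (x u 0 - x v 0))) ?addr0 // => u v; rewrite Hsym; ring.
have [u0 [v0 [u0C [v0C w0]]]] : exists u0 v0, u0 \in C /\ v0 \notin C /\ 0 < w u0 v0.
  case: (boolP [exists u, exists v, [&& u \in C, v \notin C & 0 < w u v]]).
    by move=> /existsP [u /existsP [v /and3P [? ? ?]]]; exists u, v.
  move=> Hn; exfalso.
  case/properP: HC => _ [v _ vC].
  have cl : closed (wedge w) C.
    move=> a b ab; apply/idP/idP => [aC|bC]; apply/negPn/negP => nb; move/negP: Hn; apply.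
      by apply/existsP; exists a; apply/existsP; exists b; rewrite aC nb.
    apply/existsP; exists b; apply/existsP; exists a; rewrite bC nb /=.
    by rewrite /wedge Hsym in ab.
  by have := closed_connect cl (Hc s v); rewrite sC (negbTE vC).
have cutE : cut_weight w C = \sum_(u in C) \sum_(v in ~: C) w u v.
  apply: eq_bigr => u _; rewrite big_mkcondr /=; apply: eq_bigr => v _.
  rewrite /wedge; case: ifP => // /negbT; rewrite -leNgt => H.
  by apply/eqP; rewrite eq_le H Hw0.
have bnd : forall u v, w u v * (x u 0 - x v 0) <= w u v.
  move=> u v; rewrite -{2}[w u v]mulr1; apply: ler_wpM2l => //.
  have := xlt1 u; have := xge0 v; lra.
have lt : \sum_(v in ~: C) \sum_(u in C) w u v * (x u 0 - x v 0) < cut_weight w C.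
  rewrite cutE exchange_big /=; apply: (sum_lt u0) => // [u uC|].
    by apply: ler_sum => v _; apply: bnd.
  apply: (sum_lt v0) => [|v _|]; first by rewrite in_setC.
    exact: bnd.
  rewrite -{2}[w u0 v0]mulr1 ltr_pM2l //.
  have := xlt1 u0; have := xge0 v0; lra.
rewrite ltr_pdivlMl //; apply: le_lt_trans lt; rewrite -split -key.
apply: ler_wpM2l; first exact: ltW.
apply: ler_sum => v _; rewrite -{1}[x v 0]mul1r; apply: ler_wpM2r => //.
have := Hd v; nra.
Qed.
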